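(* Let $(V,\cdot)$ be a nondegenerate intersection pairing of odd type that is not positive definite. Then there exists $u\in V$ with $u\cdot u=-n<0$ such that $u$ is ordinary (indeed $u\in 2V$) and $n-1$ is not of the form $4^a(8b+7)$ for nonnegative integers $a,b$.
   Context: An intersection pairing is a finitely generated free abelian group $V$ with a symmetric bilinear form $V\times V\to\mathbf{Z}$, $(u,w)\mapsto u\cdot w$; nondegenerate means the adjoint $V\to\mathrm{Hom}(V,\mathbf{Z})$ has nonzero determinant. It has odd type if $w\cdot w$ is odd for some $w\in V$. Positive definite means $u\cdot u>0$ for all $u\neq 0$. An element $v\in V$ is characteristic if $v\cdot w\equiv w\cdot w \pmod 2$ for all $w\in V$, and ordinary otherwise. *)

(* Defs.v *)
From mathcomp Require Import all_boot all_order all_algebra.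
Set Implicit Arguments. Unset Strict Implicit. Unset Printing Implicit Defensive.
Import Order.TTheory GRing.Theory Num.Theory.
Local Open Scope ring_scope.

(* An intersection pairing on a free abelian group of rank r: V = Z^r (row
   vectors 'rV[int]_r), with symmetric bilinear form given by a symmetric
   integer Gram matrix Q : u . w = u Q w^T. *)
Definition ipair (r : nat) (Q : 'M[int]_r) (u w : 'rV[int]_r) : int :=
  (u *m Q *m w^T) 0 0.

Definition ip_symmetric (r : nat) (Q : 'M[int]_r) : Prop := Q^T = Q.

Definition ip_nondegenerate (r : nat) (Q : 'M[int]_r) : Prop := \det Q != 0.

Definition ip_odd_type (r : nat) (Q : 'M[int]_r) : Prop :=
  exists w : 'rV[int]_r, ~~ (2 %| ipair Q w w)%Z.

Definition ip_positive_definite (r : nat) (Q : 'M[int]_r) : Prop :=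
  forall u : 'rV[int]_r, u != 0 -> 0 < ipair Q u u.

Definition ip_characteristic (r : nat) (Q : 'M[int]_r) (v : 'rV[int]_r) : Prop :=
  forall w : 'rV[int]_r, (ipair Q v w = ipair Q w w %[mod 2])%Z.

Definition ip_ordinary (r : nat) (Q : 'M[int]_r) (v : 'rV[int]_r) : Prop :=
  ~ ip_characteristic Q v.

(* Main.v *)
Require Import Defs.
From mathcomp Require Import all_boot all_order all_algebra.
From mathcomp Require Import zify ring lra.
Import Order.TTheory GRing.Theory Num.Theory.
Set Implicit Arguments. Unset Strict Implicit.
Local Open Scope ring_scope.

Section Aux.
Variables (r : nat) (Q : 'M[int]_r).

Lemma ipDl u v w : ipair Q (u + v) w = ipair Q u w + ipair Q v w.
Proof. by rewrite /ipair !mulmxDl mxE. Qed.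

Lemma ipZl (a : int) u w : ipair Q (a *: u) w = a * ipair Q u w.
Proof. by rewrite /ipair -!scalemxAl mxE. Qed.

Lemma ipsym u w : ip_symmetric Q -> ipair Q u w = ipair Q w u.
Proof.
move=> sQ; rewrite /ipair.
have -> : (w *m Q *m u^T) 0 0 = ((w *m Q *m u^T)^T) 0 0 by rewrite [RHS]mxE.
by rewrite !trmx_mul trmxK sQ mulmxA.
Qed.

Lemma ipDr u v w : ip_symmetric Q -> ipair Q w (u + v) = ipair Q w u + ipair Q w v.
Proof. by move=> sQ; rewrite !(ipsym w) // ipDl. Qed.

Lemma ipZr (a : int) u w : ip_symmetric Q -> ipair Q w (a *: u) = a * ipair Q w u.
Proof. by move=> sQ; rewrite !(ipsym w) // ipZl. Qed.

End Aux.

From Stdlib Require Import Classical.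

Lemma ip_expand (r : nat) (Q : 'M[int]_r) (a : int) x z : ip_symmetric Q ->
  ipair Q (a *: x + z) (a *: x + z) =
  a * a * ipair Q x x + 2 * a * ipair Q x z + ipair Q z z.
Proof.
move=> sQ; rewrite ipDl !ipDr // !ipZl !ipZr // (@ipsym _ Q z x) //; ring.
Qed.

Lemma nondeg_wit (r : nat) (Q : 'M[int]_r) x : ip_nondegenerate Q -> x != 0 ->
  exists z, ipair Q x z != 0.
Proof.
move=> nd xn0.
have e j : ipair Q x (delta_mx 0 j) = (x *m Q) 0 j.
  rewrite /ipair trmx_delta -colE. by rewrite /col mxE.
case: (boolP [exists j, (x *m Q) 0 j != 0]).
  by move=> /existsP [j hj]; exists (delta_mx 0 j); rewrite e.
rewrite negb_exists => /forallP hall.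
have xQ0 : x *m Q = 0.
  by apply/rowP => j; have := hall j; rewrite negbK => /eqP ->; rewrite [RHS]mxE.
have : x *m Q *m \adj Q = 0 by rewrite xQ0 mul0mx.
rewrite -mulmxA mul_mx_adj mul_mx_scalar => /eqP; rewrite scalemx_eq0.
by rewrite (negbTE nd) (negbTE xn0).
Qed.

Lemma neg_vec (r : nat) (Q : 'M[int]_r) : ip_symmetric Q -> ip_nondegenerate Q ->
  ~ ip_positive_definite Q -> exists v, ipair Q v v < 0.
Proof.
move=> sQ nd npd.
case: (classic (exists u, u != 0 /\ ipair Q u u <= 0)); last first.
  move=> H; exfalso; apply: npd => u hu; rewrite ltNge; apply/negP => h.
  by apply: H; exists u.
move=> [x [xn0 hx]].
case: (ltrP (ipair Q x x) 0) => hx2; first by exists x.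
have xx0 : ipair Q x x = 0 by apply/eqP; rewrite eq_le hx hx2.
have [z hz] := nondeg_wit nd xn0.
set c := ipair Q x z in hz.
set s := ipair Q z z.
exists ((-(c * (s * s + 1))) *: x + z).
rewrite ip_expand // xx0 -/c -/s mulr0 add0r.
move: hz; clear; move=> hz; nia.
Qed.

Lemma odd_neg (r : nat) (Q : 'M[int]_r) : ip_symmetric Q -> ip_nondegenerate Q ->
  ip_odd_type Q -> ~ ip_positive_definite Q ->
  exists w, ipair Q w w < 0 /\ ~~ (2 %| ipair Q w w)%Z.
Proof.
move=> sQ nd [y hy] npd.
have [v hv] := neg_vec sQ nd npd.
case: (boolP (2 %| ipair Q v v)%Z) => hv2; last by exists v.
set p := ipair Q v y.
set s := ipair Q y y.
set V := ipair Q v v.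
set k := s * s + 2 * p * p + 1.
exists (k *: v + y); rewrite ip_expand // -/p -/s -/V.
split; last by move: hv2 hy; rewrite -/V -/s; clear; lia.
have hV : V <= -1 by move: hv; rewrite -/V; clear; lia.
have h1 : k * k * V <= - (k * k) by nia.
have h2 : s * s + 1 <= k - 2 * p by rewrite /k; nia.
have h3 : 1 <= k by rewrite /k; nia.
have h4 : k * (s * s + 1) <= k * (k - 2 * p) by nia.
have h5 : s < s * s + 1 by nia.
nia.
Qed.

Theorem mainTheorem6 (r : nat) (Q : 'M[int]_r) :
  ip_symmetric Q -> ip_nondegenerate Q -> ip_odd_type Q -> ~ ip_positive_definite Q ->
  exists (u : 'rV[int]_r) (n : nat),
    [/\ ipair Q u u = - (n%:Z), (0 < n)%N,
        ip_ordinary Q u,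
        (exists w : 'rV[int]_r, u = 2%:Z *: w) &
        ~ (exists a b : nat, (n - 1)%N = (4 ^ a * (8 * b + 7))%N)].
Proof.
move=> sQ nd odt npd.
have [w [wn wodd]] := odd_neg sQ nd odt npd.
have [y hy] := odt.
have Eu : ipair Q (2%:Z *: w) (2%:Z *: w) = 4 * ipair Q w w.
  by rewrite ipZl ipZr // mulrA.
set m := absz (ipair Q w w).
have Em : ipair Q w w = - (m%:Z) by rewrite /m; move: wn; clear; lia.
have om : odd m by move: wodd; rewrite Em; clear; lia.
have m0 : (0 < m)%N by move: om; clear; case: m.
exists (2%:Z *: w), (4 * m)%N; split.
- by rewrite Eu Em; clear; lia.
- by lia.
- move=> ch; move: (ch y); rewrite ipZl.
  by move: hy; clear; lia.
- by exists w.
- move=> [a [b hab]]; move: hab om; case: a => [|a].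
    by rewrite expn0 mul1n; clear; lia.
  rewrite expnS; set t := (4 ^ a)%N; clear; lia.
Qed.
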